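(* Let $k\in\mathbb{R}$, $a_1>0$, $c>0$ and $\gamma\ge 1$ be fixed, with $k\neq 0$ and $c^2\neq k^2a_1^2$, and let $c(k)$ denote a fixed (possibly complex) square root of $c^2-k^2a_1^2$ (so $c(k)\neq 0$). For $Pr>0$ consider the complex polynomial $$P(X)= X^{3} + 2\,i\,k\,a_1 \left( 1+\frac{3\,\gamma}{4\,Pr} \right)X^{2} - \left(c^{2} + \frac{3\,\gamma}{Pr}a_1^2\,k^2\right)X - i\,\frac{3\,k\,a_1\,c^2}{2\,Pr}.$$ Then, as $Pr\to\infty$ (all other parameters fixed), the three roots $X^{(-)}_{Pr},X^{(0)}_{Pr},X^{(+)}_{Pr}$ of $P$ depend smoothly on $1/Pr$ and satisfy $$X_{Pr}^{(\mp)}=-ik\,a_1 \mp c(k) \mp\frac{3\,(\gamma-1)\,k\,a_1\,(k\,a_1\pm i\,c(k))}{4\,c(k)}\frac{1}{Pr}+\mathcal{O}\!\left(\frac{1}{Pr^2}\right),$$ $$X_{Pr}^{(0)}=-i\,\frac{3\,k\,a_1}{2\,Pr}+\mathcal{O}\!\left(\frac{1}{Pr^2}\right).$$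
   Context: This polynomial is the dispersion relation $P(\omega/k)=0$ of the linearized 1D compressible Navier–Stokes equations, where $a_1=2\mu/(3\rho)$ ($\mu$ viscosity, $\rho$ density), $c$ is the adiabatic speed of sound, $\gamma=C_p/C_v$, and $Pr=\mu C_p/\lambda$ is the Prandtl number. In the formula for $X^{(\mp)}_{Pr}$, the upper signs give $X^{(-)}_{Pr}$ and the lower signs give $X^{(+)}_{Pr}$. *)

(* Defs.v *)
From Stdlib Require Import Reals.
From Coquelicot Require Import Coquelicot.

Open Scope C_scope.

Definition Pdisp (k a1 c gamma Pr : R) (X : C) : C :=
  X ^ 3
  + 2 * Ci * RtoC k * RtoC a1 * (1 + 3 * RtoC gamma / (4 * RtoC Pr)) * X ^ 2
  - (RtoC c ^ 2 + 3 * RtoC gamma / RtoC Pr * RtoC a1 ^ 2 * RtoC k ^ 2) * X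
  - Ci * (3 * RtoC k * RtoC a1 * RtoC c ^ 2 / (2 * RtoC Pr)).

Definition smooth_on (f : R -> R) (a b : R) : Prop :=
  forall (n : nat) (x : R), (a < x < b)%R -> ex_derive_n f n x.

Definition Csmooth_on (f : R -> C) (a b : R) : Prop :=
  smooth_on (fun x => Re (f x)) a b /\ smooth_on (fun x => Im (f x)) a b.

(* Main.v *)
Require Import Defs.
From Stdlib Require Import Reals Lra Psatz FunctionalExtensionality Lia.
From Coquelicot Require Import Coquelicot.
Open Scope R_scope.

Fixpoint Cn (n:nat) (f:R->R) (a b:R) : Prop :=
  match n with O => True | S m => (forall x, a<x<b -> ex_derive f x) /\ Cn m (Derive f) a b end.

Lemma loc_int a b x : a<x<b -> locally x (fun y => a<y<b).
Proof. intros H. apply (open_and (fun y => a<y) (fun y => y<b)); [apply open_gt|apply open_lt|exact H]. Qed.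

Lemma Cn_ext n : forall f g a b, (forall x, a<x<b -> f x = g x) -> Cn n f a b -> Cn n g a b.
Proof.
induction n; simpl; auto. intros f g a b E [H1 H2]. split.
- intros x Hx. apply ex_derive_ext_loc with f; [|auto].
  generalize (loc_int a b x Hx). apply filter_imp. intros; auto.
- apply IHn with (Derive f); auto. intros x Hx. apply Derive_ext_loc.
  generalize (loc_int a b x Hx). apply filter_imp. intros; auto.
Qed.

Lemma Cn_mono n : forall f a b, Cn (S n) f a b -> Cn n f a b.
Proof.
induction n; simpl; auto. intros f a b [H1 [H2 H3]]. split; auto.
apply IHn. simpl. auto.
Qed.

Lemma Cn_sub n : forall f a b a' b', a <= a' -> b' <= b -> Cn n f a b -> Cn n f a' b'.
Proof.
induction n; simpl; auto. intros f a b a' b' Ha Hb [H1 H2]. split.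
- intros x Hx; apply H1; lra.
- eapply IHn; eauto.
Qed.

Lemma Cn_const n : forall c a b, Cn n (fun _ => c) a b.
Proof.
induction n; simpl; auto. intros c a b. split.
- intros; apply ex_derive_const.
- apply Cn_ext with (fun _ => 0). intros; rewrite Derive_const; auto. apply IHn.
Qed.

Lemma Cn_id n : forall a b, Cn n (fun x => x) a b.
Proof.
destruct n; simpl; auto. intros a b. split.
- intros; apply ex_derive_id.
- apply Cn_ext with (fun _ => 1). intros; rewrite <- (Derive_id x); reflexivity. apply Cn_const.
Qed.

Lemma Cn_plus n : forall f g a b, Cn n f a b -> Cn n g a b -> Cn n (fun x => f x + g x) a b.
Proof.
induction n; simpl; auto. intros f g a b [F1 F2] [G1 G2]. split.
- intros x Hx. apply (ex_derive_plus f g); auto.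
- apply Cn_ext with (fun x => Derive f x + Derive g x).
  + intros x Hx. rewrite Derive_plus; auto.
  + apply IHn; auto.
Qed.

Lemma Cn_opp n : forall f a b, Cn n f a b -> Cn n (fun x => - f x) a b.
Proof.
induction n; simpl; auto. intros f a b [F1 F2]. split.
- intros x Hx. apply (ex_derive_opp f); auto.
- apply Cn_ext with (fun x => - Derive f x).
  + intros x Hx. rewrite Derive_opp; auto.
  + apply IHn; auto.
Qed.

Lemma Cn_minus n f g a b : Cn n f a b -> Cn n g a b -> Cn n (fun x => f x - g x) a b.
Proof. intros. apply Cn_plus; auto. apply Cn_opp; auto. Qed.

Lemma Cn_mult n : forall f g a b, Cn n f a b -> Cn n g a b -> Cn n (fun x => f x * g x) a b.
Proof.
induction n; simpl; auto. intros f g a b [F1 F2] [G1 G2]. split.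
- intros x Hx. apply (ex_derive_mult f g); auto.
- apply Cn_ext with (fun x => Derive f x * g x + f x * Derive g x).
  + intros x Hx. rewrite Derive_mult; auto.
  + apply Cn_plus; apply IHn; auto.
    * apply Cn_mono. simpl. auto.
    * apply Cn_mono. simpl. auto.
Qed.

Lemma Cn_inv n : forall f a b, (forall x, a<x<b -> f x <> 0) -> Cn n f a b -> Cn n (fun x => / f x) a b.
Proof.
induction n; simpl; auto. intros f a b Hnz [F1 F2]. split.
- intros x Hx. apply ex_derive_inv; auto.
- apply Cn_ext with (fun x => - (Derive f x * (/ f x * / f x))).
  + intros x Hx. rewrite Derive_inv; auto. specialize (Hnz x Hx). field. auto.
  + apply Cn_opp. apply Cn_mult; auto. assert (Cn n f a b) by (apply Cn_mono; simpl; auto).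
    apply Cn_mult; apply IHn; auto.
Qed.

Lemma Cn_div n f g a b : (forall x, a<x<b -> g x <> 0) -> Cn n f a b -> Cn n g a b -> Cn n (fun x => f x / g x) a b.
Proof. intros. unfold Rdiv. apply Cn_mult; auto. apply Cn_inv; auto. Qed.

Lemma Cn_sqrt n : forall f a b, (forall x, a<x<b -> 0 < f x) -> Cn n f a b -> Cn n (fun x => sqrt (f x)) a b.
Proof.
induction n; simpl; auto. intros f a b Hp [F1 F2]. split.
- intros x Hx. destruct (F1 x Hx) as [df Hdf]. eexists. apply is_derive_sqrt; eauto.
- apply Cn_ext with (fun x => Derive f x * / (2 * sqrt (f x))).
  + intros x Hx. destruct (F1 x Hx) as [df Hdf]. symmetry. apply is_derive_unique.
    rewrite (is_derive_unique _ _ _ Hdf). apply is_derive_sqrt; auto.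
  + apply Cn_mult; auto. assert (Cn n f a b) by (apply Cn_mono; simpl; auto).
    apply Cn_inv. intros x Hx. specialize (Hp x Hx). generalize (sqrt_lt_R0 _ Hp). lra.
    apply Cn_mult. apply Cn_const. apply IHn; auto.
Qed.

Lemma Cn_ex_derive_n n : forall f a b, Cn (S n) f a b -> forall x, a<x<b -> ex_derive (Derive_n f n) x.
Proof.
induction n; intros f a b H x Hx.
- simpl in H. destruct H. simpl. auto.
- simpl in H. destruct H as [H1 H2].
  assert (E: Derive_n f (S n) = Derive_n (Derive f) n).
  { apply functional_extensionality. intros y. replace (S n) with (n+1)%nat by lia.
    rewrite <- (Derive_n_comp f n 1). reflexivity. }
  rewrite E. eapply IHn; eauto.
Qed.

Lemma smooth_of_Cn f a b : (forall n, Cn n f a b) -> smooth_on f a b.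
Proof.
intros H n x Hx. destruct n. simpl; auto. simpl. eapply Cn_ex_derive_n; eauto.
Qed.


Lemma Ceq (a b : C) : Re a = Re b -> Im a = Im b -> a = b.
Proof. destruct a, b; simpl; intros; subst; auto. Qed.

Definition Ok (dl:R) (m:nat) (f:R->R) := exists M, forall e, 0<e<dl -> Rabs (f e) <= M * e^m.

Lemma Ok_ext dl m f g : (forall e, 0<e<dl -> f e = g e) -> Ok dl m f -> Ok dl m g.
Proof. intros E [M H]. exists M. intros e He. rewrite <- E; auto. Qed.

Lemma Ok_plus dl m f g : Ok dl m f -> Ok dl m g -> Ok dl m (fun e => f e + g e).
Proof. intros [M1 H1] [M2 H2]. exists (M1+M2). intros e He.
  eapply Rle_trans. apply Rabs_triang. specialize (H1 e He). specialize (H2 e He). rewrite Rmult_plus_distr_r. lra. Qed.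

Lemma Ok_opp dl m f : Ok dl m f -> Ok dl m (fun e => - f e).
Proof. intros [M1 H1]. exists M1. intros e He. rewrite Rabs_Ropp. auto. Qed.

Lemma Ok_minus dl m f g : Ok dl m f -> Ok dl m g -> Ok dl m (fun e => f e - g e).
Proof. intros. apply Ok_plus; auto. apply Ok_opp; auto. Qed.

Lemma Ok_mult dl m n f g : Ok dl m f -> Ok dl n g -> Ok dl (m+n) (fun e => f e * g e).
Proof. intros [M1 H1] [M2 H2]. exists (M1*M2). intros e He.
  rewrite Rabs_mult, pow_add. specialize (H1 e He). specialize (H2 e He).
  replace (M1 * M2 * (e ^ m * e ^ n)) with ((M1 * e^m) * (M2 * e^n)) by ring.
  apply Rmult_le_compat; auto; apply Rabs_pos. Qed.

Lemma Ok_const dl c : Ok dl 0 (fun _ => c).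
Proof. exists (Rabs c). intros. simpl. lra. Qed.

Lemma Ok_id dl : Ok dl 1 (fun e => e).
Proof. exists 1. intros e He. simpl. rewrite Rabs_right; lra. Qed.

Lemma Ok_down dl m f : dl <= 1 -> Ok dl (S m) f -> Ok dl m f.
Proof. intros Hd [M H]. exists (Rabs M). intros e He. eapply Rle_trans. apply H; auto.
  simpl. assert (0 < e^m) by (apply pow_lt; lra). generalize (Rle_abs M) (Rabs_pos M). intros.
  assert (M * (e * e^m) <= Rabs M * (e * e^m)) by (apply Rmult_le_compat_r; nra).
  assert (0 <= Rabs M * e^m) by (apply Rmult_le_pos; lra).
  assert (Rabs M * (e * e^m) <= Rabs M * e^m).
  { replace (Rabs M * (e*e^m)) with ((Rabs M * e^m) * e) by ring. nra. } lra. Qed.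

Lemma Ok_inv dl f m0 : 0 < m0 -> (forall e, 0<e<dl -> m0 <= Rabs (f e)) -> Ok dl 0 (fun e => / f e).
Proof. intros Hm H. exists (/m0). intros e He. simpl. rewrite Rmult_1_r. specialize (H e He).
  assert (f e <> 0). { intro E. rewrite E, Rabs_R0 in H. lra. }
  rewrite Rabs_inv. apply Rinv_le_contravar; auto. Qed.

Lemma Ok_mult0 dl m f g : Ok dl m f -> Ok dl 0 g -> Ok dl m (fun e => f e * g e).
Proof. intros. replace m with (m+0)%nat by lia. apply Ok_mult; auto. Qed.

Lemma absle x y : Rabs x <= y -> -y <= x <= y.
Proof. unfold Rabs; destruct Rcase_abs; lra. Qed.

Section Root.
Variables p c g : R.
Hypothesis Hp : p <> 0.
Hypothesis Hc : 0 < c.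
Hypothesis Hg : 1 <= g.

Definition N0 Y := Y*Y*Y - 2*p*Y*Y + c*c*Y.
Definition D0 Y := -(3/2)*g*p*Y*Y + 3*g*p*p*Y - (3/2)*p*c*c.
Definition Q e Y := N0 Y + e * D0 Y.
Definition S3 e Y1 Y2 := Y1*Y1+Y1*Y2+Y2*Y2 - 2*p*(1+3*g*e/4)*(Y1+Y2) + c*c + 3*g*e*p*p.
Definition K := Rabs p.
Definition eta := c*c/(32*K*g).
Definition d1 := Rmin (/g) (c*c/(24*g*K*K)).
Definition d2 := eta*c*c/(4*(Rabs (D0 eta) + Rabs (D0 (-eta)) + 1)).
Definition d0 := Rmin 1 (Rmin d1 d2).

Lemma Q_diff e Y1 Y2 : Q e Y1 - Q e Y2 = (Y1 - Y2) * S3 e Y1 Y2.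
Proof. unfold Q, N0, D0, S3. field. Qed.

Lemma K_pos : 0 < K.
Proof. unfold K. apply Rabs_pos_lt. auto. Qed.

Lemma eta_pos : 0 < eta.
Proof. unfold eta. generalize K_pos; intros. apply Rdiv_lt_0_compat; nra. Qed.

Lemma d2_pos : 0 < d2.
Proof. unfold d2. generalize eta_pos; intros.
  generalize (Rabs_pos (D0 eta)) (Rabs_pos (D0 (-eta))); intros.
  apply Rdiv_lt_0_compat; [ apply Rmult_lt_0_compat; [apply Rmult_lt_0_compat|]; lra | lra]. Qed.

Lemma d1_pos : 0 < d1.
Proof. unfold d1. generalize K_pos; intros. apply Rmin_glb_lt.
  apply Rinv_0_lt_compat; lra. apply Rdiv_lt_0_compat; [nra| repeat apply Rmult_lt_0_compat; lra]. Qed.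

Lemma d0_pos : 0 < d0.
Proof. unfold d0. generalize d1_pos d2_pos; intros. apply Rmin_glb_lt; [lra| apply Rmin_glb_lt; lra]. Qed.

Lemma d0_le1 : d0 <= 1.
Proof. unfold d0. apply Rmin_l. Qed.

Lemma small_ge e : Rabs e <= d0 -> Rabs (g*e) <= 1.
Proof.
  intros H. assert (Rabs e <= / g). { eapply Rle_trans. apply H. unfold d0, d1.
  eapply Rle_trans. apply Rmin_r. eapply Rle_trans. apply Rmin_l. apply Rmin_l. }
  rewrite Rabs_mult. rewrite (Rabs_right g) by lra.
  apply Rmult_le_compat_l with (r:=g) in H0; [|lra]. rewrite Rinv_r in H0; lra.
Qed.

Lemma small_gpp e : Rabs e <= d0 -> Rabs (3*g*e*p*p) <= c*c/8.
Proof.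
  intros H. assert (Rabs e <= c*c/(24*g*K*K)). { eapply Rle_trans. apply H. unfold d0, d1.
  eapply Rle_trans. apply Rmin_r. eapply Rle_trans. apply Rmin_l. apply Rmin_r. }
  generalize K_pos; intro HK.
  replace (3*g*e*p*p) with ((3*g*(p*p)) * e) by ring. rewrite Rabs_mult.
  rewrite (Rabs_right (3*g*(p*p))) by nra.
  assert (p*p = K*K). { unfold K. rewrite <- Rabs_mult. rewrite Rabs_right; nra. }
  rewrite H1. apply Rmult_le_compat_l with (r:=3*g*(K*K)) in H0; [|nra].
  eapply Rle_trans. apply H0. right. field. split; nra.
Qed.

Lemma small_pw w : Rabs w <= 2*eta -> Rabs (p*w) <= c*c/16.
Proof.
  intros H. rewrite Rabs_mult. fold K. generalize K_pos; intro HK.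
  apply Rmult_le_compat_l with (r:=K) in H; [|lra].
  eapply Rle_trans. apply H. unfold eta.
  replace (K*(2*(c*c/(32*K*g)))) with ((c*c/16) * / g) by (field; split; lra).
  assert (/g <= 1). { replace 1 with (/1) by field. apply Rinv_le_contravar; lra. }
  assert (0 <= c*c/16) by nra. nra.
Qed.

Lemma S3_pos e Y1 Y2 : Rabs e <= d0 -> Rabs Y1 <= eta -> Rabs Y2 <= eta -> c*c/2 <= S3 e Y1 Y2.
Proof.
  intros He H1 H2.
  assert (Hw : Rabs (Y1+Y2) <= 2*eta). { eapply Rle_trans. apply Rabs_triang. lra. }
  apply small_pw in Hw. apply absle in Hw.
  generalize (absle _ _ (small_ge e He)); intro Hu.
  generalize (absle _ _ (small_gpp e He)); intro Hz.
  unfold S3.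
  set (u := g*e) in *. set (v := p*(Y1+Y2)) in *.
  replace (Y1*Y1+Y1*Y2+Y2*Y2 - 2*p*(1+3*g*e/4)*(Y1+Y2) + c*c + 3*g*e*p*p)
    with (Y1*Y1+Y1*Y2+Y2*Y2 - 2*(1+3*u/4)*v + c*c + 3*g*e*p*p) by (unfold u, v; field).
  assert (0 <= Y1*Y1+Y1*Y2+Y2*Y2) by nra.
  assert (0 <= (1+3*u/4)*(c*c/16 - v)) by nra.
  assert (0 <= (1+3*u/4)*(c*c/16 + v)) by nra.
  nra.
Qed.

Lemma S3_pos' e Y1 Y2 : Rabs e <= d0 -> Rabs Y1 <= eta -> Rabs Y2 <= eta -> 0 < S3 e Y1 Y2.
Proof. intros. generalize (S3_pos e Y1 Y2 H H0 H1). nra. Qed.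

Lemma N0_eta : eta*c*c/2 <= N0 eta.
Proof.
  generalize eta_pos; intro He.
  assert (Rabs eta <= eta) by (rewrite Rabs_right; lra).
  assert (Rabs 0 <= d0) by (rewrite Rabs_R0; generalize d0_pos; lra).
  generalize (S3_pos 0 eta 0 H0 H). intro HS. 
  assert (Rabs 0 <= eta) by (rewrite Rabs_R0; lra). specialize (HS H1).
  unfold N0. unfold S3 in HS. nra.
Qed.

Lemma N0_meta : N0 (-eta) <= -(eta*c*c/2).
Proof.
  generalize eta_pos; intro He.
  assert (Rabs (-eta) <= eta) by (rewrite Rabs_Ropp, Rabs_right; lra).
  assert (Rabs 0 <= d0) by (rewrite Rabs_R0; generalize d0_pos; lra).
  generalize (S3_pos 0 (-eta) 0 H0 H). intro HS. 
  assert (Rabs 0 <= eta) by (rewrite Rabs_R0; lra). specialize (HS H1).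
  unfold N0. unfold S3 in HS. nra.
Qed.

Lemma small_D0 e Y : Rabs e <= d0 -> (Y = eta \/ Y = -eta) -> Rabs (e * D0 Y) <= eta*c*c/4.
Proof.
  intros He HY. rewrite Rabs_mult.
  assert (Rabs e <= d2). { eapply Rle_trans. apply He. unfold d0.
    eapply Rle_trans. apply Rmin_r. apply Rmin_r. }
  assert (Rabs (D0 Y) <= Rabs (D0 eta) + Rabs (D0 (-eta)) + 1).
  { generalize (Rabs_pos (D0 eta)) (Rabs_pos (D0 (-eta))); intros. destruct HY; subst; lra. }
  generalize eta_pos; intros.
  generalize (Rabs_pos (D0 eta)) (Rabs_pos (D0 (-eta))); intros.
  unfold d2 in H.
  assert (HM: 0 < Rabs (D0 eta) + Rabs (D0 (-eta)) + 1) by lra.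
  set (M := Rabs (D0 eta) + Rabs (D0 (-eta)) + 1) in *.
  assert (Rabs e * M <= eta*c*c/4).
  { apply Rmult_le_compat_r with (r:=M) in H; [|lra]. eapply Rle_trans. apply H.
    right. field. lra. }
  generalize (Rabs_pos e) (Rabs_pos (D0 Y)); intros. nra.
Qed.

Lemma Q_eta e : Rabs e <= d0 -> 0 < Q e eta.
Proof.
  intros He. generalize (absle _ _ (small_D0 e eta He (or_introl eq_refl))). intros.
  generalize N0_eta eta_pos; intros.
  assert (0 < eta*c*c) by (apply Rmult_lt_0_compat; [apply Rmult_lt_0_compat|]; lra). unfold Q. lra.
Qed.

Lemma Q_meta e : Rabs e <= d0 -> Q e (-eta) < 0.
Proof.
  intros He. generalize (absle _ _ (small_D0 e (-eta) He (or_intror eq_refl))). intros.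
  generalize N0_meta eta_pos; intros.
  assert (0 < eta*c*c) by (apply Rmult_lt_0_compat; [apply Rmult_lt_0_compat|]; lra). unfold Q. lra.
Qed.

Lemma Q_cont e : continuity (fun Y => Q e Y).
Proof. unfold Q, N0, D0. intros x. reg. Qed.

Lemma Y0_ex e : {Y | Rabs e <= d0 -> (Rabs Y <= eta /\ Q e Y = 0)}.
Proof.
  destruct (Rle_dec (Rabs e) d0) as [He|He].
  - destruct (IVT (fun Y => Q e Y) (-eta) eta (Q_cont e)) as [z [Hz1 Hz2]].
    generalize eta_pos; lra. apply Q_meta; auto. apply Q_eta; auto.
    exists z. intros _. split; auto. apply Rabs_le. lra.
  - exists 0. intros; contradiction.
Qed.

Definition Y0 e := proj1_sig (Y0_ex e).

Lemma Y0_spec e : Rabs e <= d0 -> Rabs (Y0 e) <= eta /\ Q e (Y0 e) = 0.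
Proof. unfold Y0. destruct (Y0_ex e). simpl. auto. Qed.

Lemma Y0_unique e Y : Rabs e <= d0 -> Rabs Y <= eta -> Q e Y = 0 -> Y0 e = Y.
Proof.
  intros He HY HQ. destruct (Y0_spec e He) as [H1 H2].
  generalize (Q_diff e (Y0 e) Y). rewrite H2, HQ. intros E.
  generalize (S3_pos' e (Y0 e) Y He H1 HY). intros.
  assert ((Y0 e - Y) * S3 e (Y0 e) Y = 0) by lra.
  apply Rmult_integral in H0. destruct H0; lra.
Qed.

Lemma Y0_0 : Y0 0 = 0.
Proof.
  apply Y0_unique. rewrite Rabs_R0. generalize d0_pos; lra.
  rewrite Rabs_R0. generalize eta_pos; lra. unfold Q, N0; ring.
Qed.


Lemma deriv_q f x q r : 0 < r -> (forall h, Rabs h < r -> f (x+h) - f x = h * q h) ->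
  continuous q 0 -> is_derive f x (q 0).
Proof.
  intros Hr Hf Hq. apply is_derive_Reals. intros eps Heps.
  apply continuity_pt_filterlim in Hq. destruct (Hq eps Heps) as [alp [Halp H]].
  exists (mkposreal _ (Rmin_stable_in_posreal (mkposreal _ Hr) (mkposreal _ Halp))).
  simpl. intros h Hh0 Hh.
  assert (Rabs h < r) by (eapply Rlt_le_trans; [apply Hh|apply Rmin_l]).
  assert (Rabs h < alp) by (eapply Rlt_le_trans; [apply Hh|apply Rmin_r]).
  rewrite Hf by auto. replace (h * q h / h) with (q h) by (field; auto).
  apply H. split. split; [unfold no_cond; auto | auto]. simpl. unfold R_dist. rewrite Rminus_0_r. auto.
Qed.

Lemma cont_lip f x L r : 0 < r -> (forall h, Rabs h < r -> Rabs (f (x+h) - f x) <= L * Rabs h) ->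
  continuous (fun h => f (x+h)) 0.
Proof.
  intros Hr Hf. apply continuity_pt_filterlim. intros eps Heps.
  exists (Rmin r (eps/(Rabs L + 1))). split.
  { apply Rmin_glb_lt; auto. apply Rdiv_lt_0_compat; auto. generalize (Rabs_pos L); lra. }
  intros h [_ Hh]. simpl in *. unfold R_dist in *. rewrite Rminus_0_r in Hh.
  rewrite Rplus_0_r.
  assert (Rabs h < r) by (eapply Rlt_le_trans; [apply Hh|apply Rmin_l]).
  assert (Rabs h < eps/(Rabs L + 1)) by (eapply Rlt_le_trans; [apply Hh|apply Rmin_r]).
  eapply Rle_lt_trans. apply Hf; auto.
  generalize (Rabs_pos L) (Rabs_pos h) (Rle_abs L); intros.
  apply Rmult_lt_compat_r with (r := Rabs L + 1) in H0; [|lra].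
  replace (eps / (Rabs L + 1) * (Rabs L + 1)) with eps in H0 by (field; lra). nra.
Qed.

Lemma Y0_step e h : Rabs e <= d0 -> Rabs (e+h) <= d0 ->
  (Y0 (e+h) - Y0 e) * S3 (e+h) (Y0 (e+h)) (Y0 e) = - h * D0 (Y0 e).
Proof.
  intros He Heh. destruct (Y0_spec e He) as [_ H1]. destruct (Y0_spec (e+h) Heh) as [_ H2].
  rewrite <- Q_diff. rewrite H2. unfold Q in *. nra.
Qed.

Lemma Y0_lip e h : Rabs e <= d0 -> Rabs (e+h) <= d0 ->
  Rabs (Y0 (e+h) - Y0 e) <= (2 * Rabs (D0 (Y0 e)) / (c*c)) * Rabs h.
Proof.
  intros He Heh. generalize (Y0_step e h He Heh). intros E.
  destruct (Y0_spec e He) as [A1 _]. destruct (Y0_spec (e+h) Heh) as [A2 _].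
  generalize (S3_pos _ _ _ Heh A2 A1). intros HS.
  assert (Rabs (Y0 (e + h) - Y0 e) * S3 (e + h) (Y0 (e + h)) (Y0 e) = Rabs h * Rabs (D0 (Y0 e))).
  { rewrite <- (Rabs_right (S3 _ _ _)) by nra. rewrite <- !Rabs_mult. rewrite E.
    rewrite <- Rabs_Ropp. f_equal. ring. }
  assert (0 < c*c) by nra.
  generalize (Rabs_pos (Y0 (e + h) - Y0 e)) (Rabs_pos h) (Rabs_pos (D0 (Y0 e))); intros.
  apply Rmult_le_reg_r with (r := c*c/2). nra.
  replace (2 * Rabs (D0 (Y0 e)) / (c * c) * Rabs h * (c * c / 2)) with (Rabs h * Rabs (D0 (Y0 e))) by (field; lra).
  rewrite <- H. nra.
Qed.

Ltac contR H := repeat match goal with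
  | |- continuous (fun x => ?c) _ => apply continuous_const
  | |- continuous (fun x => x) _ => apply continuous_id
  | |- continuous (Rplus ?a) ?z => change (continuous (fun x => Rplus a x) z)
  | |- continuous (Rmult ?a) ?z => change (continuous (fun x => Rmult a x) z)
  | |- continuous (fun x => Rplus _ _) _ => apply (continuous_plus (V:=R_NormedModule))
  | |- continuous (fun x => Rminus _ _) _ => apply (continuous_minus (V:=R_NormedModule))
  | |- continuous (fun x => Ropp _) _ => apply (continuous_opp (V:=R_NormedModule))
  | |- continuous (fun x => Rmult _ _) _ => apply (continuous_mult (K:=R_AbsRing))
  | |- continuous (fun x => Rdiv _ _) _ => unfold Rdiv
  | _ => exact H
  end.

Ltac cnt H := repeat match goal with
  | |- Cn _ (fun x => ?c) _ _ => apply Cn_const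
  | |- Cn _ (fun x => x) _ _ => apply Cn_id
  | |- Cn ?n (Rplus ?a) ?u ?v => change (Cn n (fun x => Rplus a x) u v)
  | |- Cn ?n (Rmult ?a) ?u ?v => change (Cn n (fun x => Rmult a x) u v)
  | |- Cn _ (fun x => Rplus _ _) _ _ => apply Cn_plus
  | |- Cn _ (fun x => Rminus _ _) _ _ => apply Cn_minus
  | |- Cn _ (fun x => Ropp _) _ _ => apply Cn_opp
  | |- Cn _ (fun x => Rmult _ _) _ _ => apply Cn_mult
  | |- Cn _ (fun x => Rdiv _ (Rmult (IZR _) (IZR _))) _ _ => unfold Rdiv
  | |- Cn _ (fun x => Rdiv _ (IZR _)) _ _ => unfold Rdiv
  | _ => exact H
  end.

Definition Y0d e := - D0 (Y0 e) / S3 e (Y0 e) (Y0 e).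

Lemma Y0_deriv e : Rabs e < d0 -> is_derive Y0 e (Y0d e).
Proof.
  intros He.
  set (q := fun h => - D0 (Y0 e) * / S3 (e+h) (Y0 (e+h)) (Y0 e)).
  replace (Y0d e) with (q 0) by (unfold q, Y0d; rewrite Rplus_0_r; reflexivity).
  apply deriv_q with (r := d0 - Rabs e). lra.
  - intros h Hh. assert (Rabs (e+h) <= d0).
    { generalize (Rabs_triang e h). lra. }
    generalize (Y0_step e h (Rlt_le _ _ He) H). intros E.
    destruct (Y0_spec e (Rlt_le _ _ He)) as [A1 _]. destruct (Y0_spec (e+h) H) as [A2 _].
    generalize (S3_pos' _ _ _ H A2 A1). intros HS.
    unfold q. apply Rmult_eq_reg_r with (r := S3 (e + h) (Y0 (e + h)) (Y0 e)). 2: lra.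
    rewrite E. field. lra.
  - assert (Hc0 : continuous (fun h => Y0 (e+h)) 0).
    { apply cont_lip with (L := 2 * Rabs (D0 (Y0 e)) / (c*c)) (r := d0 - Rabs e). lra.
      intros h Hh. apply Y0_lip. lra. generalize (Rabs_triang e h). lra. }
    unfold q. apply (continuous_mult (K:=R_AbsRing)). apply continuous_const.
    apply continuous_Rinv_comp.
    + unfold S3. contR Hc0.
    + cbv beta. rewrite Rplus_0_r. destruct (Y0_spec e (Rlt_le _ _ He)) as [A1 _].
      generalize (S3_pos' e _ _ (Rlt_le _ _ He) A1 A1). lra.
Qed.

Lemma Y0_Cn n : Cn n Y0 (-d0) d0.
Proof.
  induction n. simpl; auto. simpl. split.
  - intros x Hx. exists (Y0d x). apply Y0_deriv. apply Rabs_def1; lra.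
  - apply Cn_ext with Y0d.
    + intros x Hx. symmetry. apply is_derive_unique. apply Y0_deriv. apply Rabs_def1; lra.
    + unfold Y0d. apply Cn_div.
      * intros x Hx. assert (Rabs x <= d0) by (apply Rlt_le, Rabs_def1; lra).
        destruct (Y0_spec x H) as [A1 _]. generalize (S3_pos' x _ _ H A1 A1). lra.
      * unfold D0. cnt IHn.
      * unfold S3. cnt IHn.
Qed.


Hypothesis Hkap : c*c - p*p <> 0.
Variable ck : C.
Hypothesis Hck : (ck * ck)%C = RtoC (c*c - p*p).

Definition beta e := 2*p*(1+3*g*e/4) - Y0 e.
Definition C2 e := c*c + 3*g*e*p*p.
Definition Dl e := - beta e * beta e + 4 * C2 e - 4 * Y0 e * beta e.
Definition kap := c*c - p*p.
Definition uu e := Dl e / kap.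
Definition rho e := sqrt (uu e).
Definition rho1 := 3/2*(g-1)*p*p/kap.

Lemma beta_Cn n : Cn n beta (-d0) d0.
Proof. unfold beta. generalize (Y0_Cn n). intro H. cnt H. Qed.

Lemma uu_Cn n : Cn n uu (-d0) d0.
Proof. unfold uu. apply Cn_div. intros; unfold kap; auto.
  unfold Dl, beta, C2. generalize (Y0_Cn n); intro H. cnt H. apply Cn_const. Qed.

Lemma uu_0 : uu 0 = 4.
Proof. unfold uu, Dl, beta, C2. rewrite Y0_0. unfold kap. field. auto. Qed.

Lemma uu_near0 : exists d3, 0 < d3 /\ forall x, Rabs x < d3 -> 3 < uu x.
Proof.
  destruct (uu_Cn 1) as [H1 _]. assert (ex_derive uu 0) by (apply H1; generalize d0_pos; lra).
  assert (continuity_pt uu 0) by (apply continuity_pt_filterlim; apply (ex_derive_continuous (K:=R_AbsRing) (V:=R_NormedModule)); auto).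
  destruct (H0 1 Rlt_0_1) as [alp [Ha Hal]].
  exists alp. split; auto. intros x Hx. destruct (Req_dec x 0) as [E|E].
  - subst; rewrite uu_0; lra.
  - assert (R_dist (uu x) (uu 0) < 1).
    { apply Hal. split. split. exact I. auto. simpl; unfold R_dist; rewrite Rminus_0_r; auto. }
    rewrite uu_0 in H2. unfold R_dist in H2. apply Rabs_def2 in H2. lra.
Qed.

Lemma rho_Cn n dl : dl <= d0 -> (forall x, Rabs x < dl -> 3 < uu x) -> Cn n rho (-dl) dl.
Proof. intros Hd Hu. unfold rho. apply Cn_sqrt.
  intros x Hx. assert (Rabs x < dl) by (apply Rabs_def1; lra). specialize (Hu x H); lra.
  apply Cn_sub with (-d0) d0; try lra. apply uu_Cn. Qed.

Ltac bd H := repeat match goal with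
  | |- Ok _ 0 (fun x => ?c) => apply Ok_const
  | |- Ok _ 0 (fun x => x) => apply Ok_down; [assumption | apply Ok_id]
  | |- Ok ?d 0 (Rmult ?a) => change (Ok d 0 (fun x => Rmult a x))
  | |- Ok ?d 0 (Rplus ?a) => change (Ok d 0 (fun x => Rplus a x))
  | |- Ok _ 0 (fun x => Rplus _ _) => apply Ok_plus
  | |- Ok _ 0 (fun x => Rminus _ _) => apply Ok_minus
  | |- Ok _ 0 (fun x => Ropp _) => apply Ok_opp
  | |- Ok _ 0 (fun x => Rmult _ _) => apply (Ok_mult _ 0 0)
  | |- Ok _ 0 (fun x => Rdiv _ _) => unfold Rdiv
  | _ => exact H
  end.

Section Bounds.
Variable dl : R.
Hypothesis Hdl0 : 0 < dl.
Hypothesis Hdl : dl <= d0.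
Hypothesis Hu : forall x, Rabs x < dl -> 3 < uu x.

Lemma Hdl1 : dl <= 1.
Proof. generalize d0_le1; lra. Qed.

Lemma in_d0 e : 0 < e < dl -> Rabs e <= d0.
Proof. intros. rewrite Rabs_right; lra. Qed.

Lemma Y0_O1 : Ok dl 1 Y0.
Proof.
  exists (2*Rabs (D0 0)/(c*c)). intros e He. generalize (Y0_lip 0 e).
  rewrite Rplus_0_l, Y0_0, Rminus_0_r. intros H. simpl. rewrite Rmult_1_r.
  rewrite (Rabs_right e) in H by lra. apply H.
  rewrite Rabs_R0; generalize d0_pos; lra. lra.
Qed.

Lemma Y0_O0 : Ok dl 0 Y0.
Proof. apply Ok_down. apply Hdl1. apply Y0_O1. Qed.

Definition Zf e := Y0 e - 3/2*p*e.

Lemma Z_O2 : Ok dl 2 Zf.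
Proof.
  generalize Hdl1; intro H1.
  apply Ok_ext with (fun e => ((3/2*p*e) * (- (Y0 e * (Y0 e - 2*p*(1+3*g*e/4)) + e * (3*g*p*p)))) * / S3 e (Y0 e) 0).
  - intros e He. generalize (Y0_step 0 e). rewrite Rplus_0_l, Y0_0, Rminus_0_r.
    intro E. specialize (E (ltac:(rewrite Rabs_R0; generalize d0_pos; lra)) (in_d0 e He)).
    destruct (Y0_spec e (in_d0 e He)) as [A _].
    assert (Rabs 0 <= eta) by (rewrite Rabs_R0; generalize eta_pos; lra).
    generalize (S3_pos' e _ _ (in_d0 e He) A H). intro HS.
    unfold Zf. apply Rmult_eq_reg_r with (S3 e (Y0 e) 0). 2: lra.
    rewrite Rmult_assoc, Rinv_l by lra. rewrite Rmult_1_r.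
    unfold D0 in E. unfold S3 in *. 
    replace (Y0 e - 3/2*p*e) with (Y0 e - 3/2*p*e) by ring. nra.
  - apply Ok_mult0.
    + apply (Ok_mult _ 1 1).
      * apply (Ok_mult _ 0 1). apply Ok_const. apply Ok_id.
      * apply Ok_opp. apply Ok_plus. apply Ok_mult0. apply Y0_O1. generalize Y0_O0; intro H0. bd H0.
        apply (Ok_mult _ 1 0). apply Ok_id. apply Ok_const.
    + apply Ok_inv with (c*c/2). nra. intros e He.
      destruct (Y0_spec e (in_d0 e He)) as [A _].
      assert (Rabs 0 <= eta) by (rewrite Rabs_R0; generalize eta_pos; lra).
      generalize (S3_pos e _ _ (in_d0 e He) A H). intro HS. assert (0 < c*c) by nra. rewrite Rabs_right; lra.
Qed.


Lemma W_id e : Dl e - 4*kap - 6*(g-1)*p*p*e = Zf e * (-4*p - 2*(3/2*(g-1)*p*e) + 4*(3/2*p*e) + 3*Zf e) - e*e*(9/4*(g-1)*(g-1)*p*p + 9*(g-1)*p*p).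
Proof. unfold Dl, beta, C2, Zf, kap. field. Qed.

Lemma Z_O0 : Ok dl 0 Zf.
Proof. apply Ok_down. apply Hdl1. apply Ok_down. apply Hdl1. apply Z_O2. Qed.

Lemma W_O2 : Ok dl 2 (fun e => Dl e - 4*kap - 6*(g-1)*p*p*e).
Proof.
  generalize Hdl1; intro H1.
  apply Ok_ext with (fun e => Zf e * (-4*p - 2*(3/2*(g-1)*p*e) + 4*(3/2*p*e) + 3*Zf e) - e*e*(9/4*(g-1)*(g-1)*p*p + 9*(g-1)*p*p)).
  intros; rewrite W_id; reflexivity.
  apply Ok_minus. apply Ok_mult0. apply Z_O2. generalize Z_O0; intro H0. bd H0.
  apply Ok_mult0. apply (Ok_mult _ 1 1); apply Ok_id. apply Ok_const.
Qed.

Definition w2 e := uu e - 4 - 4*rho1*e.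

Lemma w2_O2 : Ok dl 2 w2.
Proof.
  apply Ok_ext with (fun e => (Dl e - 4*kap - 6*(g-1)*p*p*e) * / kap).
  intros; unfold w2, uu, rho1; field; unfold kap; auto.
  apply Ok_mult0. apply W_O2. apply Ok_const.
Qed.

Lemma um4_O1 : Ok dl 1 (fun e => uu e - 4).
Proof.
  apply Ok_ext with (fun e => w2 e + (4*rho1)*e).
  intros; unfold w2; ring.
  apply Ok_plus. apply Ok_down. apply Hdl1. apply w2_O2. apply (Ok_mult _ 0 1). apply Ok_const. apply Ok_id.
Qed.

Definition r2 e := rho e - 2 - rho1*e.

Lemma rho_sq e : 0 < e < dl -> rho e * rho e = uu e /\ 0 <= rho e.
Proof. intros He. assert (3 < uu e) by (apply Hu; rewrite Rabs_right; lra).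
  unfold rho. split. apply sqrt_sqrt; lra. apply sqrt_pos. Qed.

Lemma r2_O2 : Ok dl 2 r2.
Proof.
  apply Ok_ext with (fun e => (w2 e - rho1*e*(uu e - 4) * / (rho e + 2)) * / (rho e + 2)).
  - intros e He. destruct (rho_sq e He) as [E P]. unfold w2, r2. rewrite <- E. field. lra.
  - assert (Hi : Ok dl 0 (fun e => / (rho e + 2))).
    { apply Ok_inv with 2. lra. intros e He. destruct (rho_sq e He) as [E P]. rewrite Rabs_right; lra. }
    apply Ok_mult0; auto. apply Ok_minus. apply w2_O2. apply Ok_mult0; auto.
    apply (Ok_mult _ 1 1). apply (Ok_mult _ 0 1). apply Ok_const. apply Ok_id. apply um4_O1.
Qed.


Definition X0f e : C := (0, - Y0 e).
Definition Xpf e : C := (Re ck * rho e / 2, (- beta e + Im ck * rho e) / 2).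
Definition Xmf e : C := (- (Re ck * rho e) / 2, (- beta e - Im ck * rho e) / 2).

Lemma Xpf_eq e : Xpf e = ((- (Ci * RtoC (beta e)) + ck * RtoC (rho e)) / 2)%C.
Proof. unfold Xpf. destruct ck as [a b]. apply Ceq; simpl; field. Qed.

Lemma Xmf_eq e : Xmf e = ((- (Ci * RtoC (beta e)) - ck * RtoC (rho e)) / 2)%C.
Proof. unfold Xmf. destruct ck as [a b]. apply Ceq; simpl; field. Qed.

Lemma X0f_eq e : X0f e = (- (Ci * RtoC (Y0 e)))%C.
Proof. unfold X0f. apply Ceq; simpl; ring. Qed.

Lemma ck_nz : ck <> 0%C.
Proof. intro E. rewrite E in Hck. apply (f_equal fst) in Hck. simpl in Hck. apply Hkap. lra. Qed.

Lemma CiCi : (Ci * Ci = - 1)%C.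
Proof. apply Ceq; simpl; ring. Qed.


Lemma beta_C e : RtoC (beta e) = (2*RtoC p*(1+3*RtoC g*RtoC e/4) - RtoC (Y0 e))%C.
Proof. unfold beta. apply Ceq; simpl; field. Qed.

Lemma Zh_C e : RtoC (Zf e / 2) = ((RtoC (Y0 e) - 3/2*RtoC p*RtoC e)/2)%C.
Proof. unfold Zf. apply Ceq; simpl; field. Qed.

Lemma r2h_C e : RtoC (r2 e / 2) = ((RtoC (rho e) - 2 - 3/2*(RtoC g - 1)*RtoC p*RtoC p/(ck*ck)*RtoC e)/2)%C.
Proof. rewrite Hck. unfold r2, rho1, kap. apply Ceq; simpl; field; auto. Qed.

Lemma Xp_asym k a1 : k*a1 = p -> exists M, forall e, 0<e<dl ->
  Cmod (Xpf e - (- Ci * RtoC k * RtoC a1 + ck + 3 * (RtoC g - 1) * RtoC k * RtoC a1 * (RtoC k * RtoC a1 - Ci * ck) / (4 * ck) * RtoC e))%C <= M * e^2.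
Proof.
  intros Hka. destruct Z_O2 as [MZ HZ]. destruct r2_O2 as [Mr Hr].
  exists (MZ/2 + Cmod ck * Mr/2). intros e He.
  assert (E : (Xpf e - (- Ci * RtoC k * RtoC a1 + ck + 3 * (RtoC g - 1) * RtoC k * RtoC a1 * (RtoC k * RtoC a1 - Ci * ck) / (4 * ck) * RtoC e))%C = (Ci * RtoC (Zf e / 2) + ck * RtoC (r2 e / 2))%C).
  { rewrite Zh_C, r2h_C, Xpf_eq, beta_C. rewrite <- Hka, RtoC_mult. field. apply ck_nz. }
  rewrite E. eapply Rle_trans. apply Cmod_triangle. rewrite !Cmod_mult, Cmod_Ci, !Cmod_R.
  specialize (HZ e He). specialize (Hr e He).
  unfold Rdiv. rewrite !Rabs_mult. rewrite (Rabs_right (/2)) by lra.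
  generalize (Cmod_ge_0 ck) (Rabs_pos (r2 e)); intros. nra.
Qed.

Lemma Xm_asym k a1 : k*a1 = p -> exists M, forall e, 0<e<dl ->
  Cmod (Xmf e - (- Ci * RtoC k * RtoC a1 - ck - 3 * (RtoC g - 1) * RtoC k * RtoC a1 * (RtoC k * RtoC a1 + Ci * ck) / (4 * ck) * RtoC e))%C <= M * e^2.
Proof.
  intros Hka. destruct Z_O2 as [MZ HZ]. destruct r2_O2 as [Mr Hr].
  exists (MZ/2 + Cmod ck * Mr/2). intros e He.
  assert (E : (Xmf e - (- Ci * RtoC k * RtoC a1 - ck - 3 * (RtoC g - 1) * RtoC k * RtoC a1 * (RtoC k * RtoC a1 + Ci * ck) / (4 * ck) * RtoC e))%C = (Ci * RtoC (Zf e / 2) + (- ck) * RtoC (r2 e / 2))%C).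
  { rewrite Zh_C, r2h_C, Xmf_eq, beta_C. rewrite <- Hka, RtoC_mult. field. apply ck_nz. }
  rewrite E. eapply Rle_trans. apply Cmod_triangle. rewrite !Cmod_mult, Cmod_Ci, !Cmod_R, Cmod_opp.
  specialize (HZ e He). specialize (Hr e He).
  unfold Rdiv. rewrite !Rabs_mult. rewrite (Rabs_right (/2)) by lra.
  generalize (Cmod_ge_0 ck) (Rabs_pos (r2 e)); intros. nra.
Qed.

Lemma X0_asym k a1 : k*a1 = p -> exists M, forall e, 0<e<dl ->
  Cmod (X0f e - (- Ci * (3 * RtoC k * RtoC a1 / 2) * RtoC e))%C <= M * e^2.
Proof.
  intros Hka. destruct Z_O2 as [MZ HZ]. exists MZ. intros e He.
  assert (E : (X0f e - (- Ci * (3 * RtoC k * RtoC a1 / 2) * RtoC e))%C = (Ci * RtoC (- Zf e))%C).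
  { rewrite X0f_eq. unfold Zf. rewrite <- Hka. apply Ceq; simpl; field. }
  rewrite E, Cmod_mult, Cmod_Ci, Cmod_R, Rabs_Ropp, Rmult_1_l. apply HZ; auto.
Qed.

Lemma Rfact e : 0 < e < dl -> 3/2*p*c*c*e = Y0 e * ((beta e * beta e + Dl e)/4).
Proof.
  intros He. destruct (Y0_spec e (in_d0 e He)) as [_ HQ].
  assert (Y0 e * ((beta e * beta e + Dl e)/4) - 3/2*p*c*c*e = Q e (Y0 e)).
  { unfold Q, N0, D0, Dl, C2, beta. field. }
  lra.
Qed.

Lemma factor k a1 e X : k*a1 = p -> 0 < e < dl ->
  Pdisp k a1 c g (/e) X = ((X - Xmf e)*(X - X0f e)*(X - Xpf e))%C.
Proof.
  intros Hka He.
  destruct (rho_sq e He) as [Hr _].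
  assert (Hs : (ck * RtoC (rho e) * (ck * RtoC (rho e)) = RtoC (Dl e))%C).
  { transitivity (ck*ck*(RtoC (rho e * rho e)))%C. rewrite RtoC_mult; ring.
    rewrite Hck, Hr. unfold uu. rewrite <- RtoC_mult. f_equal. unfold kap in *. field. auto. }
  rewrite Xmf_eq, X0f_eq, Xpf_eq.
  transitivity ((X + Ci*RtoC (Y0 e)) * (X*X + Ci*RtoC (beta e)*X + (Ci*Ci*RtoC (beta e)*RtoC (beta e) - (ck * RtoC (rho e) * (ck * RtoC (rho e))))/4))%C.
  2: field.
  rewrite Hs, CiCi.
  transitivity (X^3 + Ci*(RtoC (beta e) + RtoC (Y0 e))*X^2 + ((-1*RtoC (beta e)*RtoC (beta e) - RtoC (Dl e))/4 + Ci*Ci*RtoC (Y0 e)*RtoC (beta e))*X + Ci*RtoC (Y0 e)*((-1*RtoC (beta e)*RtoC (beta e) - RtoC (Dl e))/4))%C.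
  2: ring.
  rewrite CiCi.
  assert (He0 : e <> 0) by lra.
  assert (A1 : (2*RtoC k*RtoC a1*(1 + 3*RtoC g/(4*RtoC (/e))) = RtoC (beta e) + RtoC (Y0 e))%C).
  { unfold beta. rewrite <- Hka. apply Ceq; simpl; field; auto. }
  assert (A2 : (RtoC c^2 + 3*RtoC g/RtoC (/e)*RtoC a1^2*RtoC k^2 = -((-1*RtoC (beta e)*RtoC (beta e) - RtoC (Dl e))/4 + -1*RtoC (Y0 e)*RtoC (beta e)))%C).
  { unfold Dl, C2, beta. rewrite <- Hka. apply Ceq; simpl; field; auto. }
  assert (A3 : (3*RtoC k*RtoC a1*RtoC c^2/(2*RtoC (/e)) = -(RtoC (Y0 e)*((-1*RtoC (beta e)*RtoC (beta e) - RtoC (Dl e))/4)))%C).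
  { transitivity (RtoC (3/2*p*c*c*e)).
    - rewrite <- Hka. apply Ceq; simpl; field; auto.
    - rewrite (Rfact e He). apply Ceq; simpl; field. }
  transitivity (X^3 + Ci*(2*RtoC k*RtoC a1*(1 + 3*RtoC g/(4*RtoC (/e))))*X^2 - (RtoC c^2 + 3*RtoC g/RtoC (/e)*RtoC a1^2*RtoC k^2)*X - Ci*(3*RtoC k*RtoC a1*RtoC c^2/(2*RtoC (/e))))%C.
  { unfold Pdisp. ring. }
  rewrite A1, A2, A3. ring.
Qed.
End Bounds.

Ltac cnt2 H1 H2 := repeat match goal with
  | |- Cn _ (fun x => ?c) _ _ => apply Cn_const
  | |- Cn _ (fun x => x) _ _ => apply Cn_id
  | |- Cn ?n (Rplus ?a) ?u ?v => change (Cn n (fun x => Rplus a x) u v)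
  | |- Cn ?n (Rmult ?a) ?u ?v => change (Cn n (fun x => Rmult a x) u v)
  | |- Cn _ (fun x => Rplus _ _) _ _ => apply Cn_plus
  | |- Cn _ (fun x => Rminus _ _) _ _ => apply Cn_minus
  | |- Cn _ (fun x => Ropp _) _ _ => apply Cn_opp
  | |- Cn _ (fun x => Rmult _ _) _ _ => apply Cn_mult
  | |- Cn _ (fun x => Rdiv _ (IZR _)) _ _ => unfold Rdiv
  | _ => first [exact H1 | exact H2]
  end.

Lemma main_p : exists dl Xm X0 Xp, 0 < dl /\
  Csmooth_on Xm (-dl) dl /\ Csmooth_on X0 (-dl) dl /\ Csmooth_on Xp (-dl) dl /\
  (forall k a1, k*a1 = p -> forall e, 0 < e < dl -> forall X,
     Pdisp k a1 c g (/e) X = ((X - Xm e)*(X - X0 e)*(X - Xp e))%C) /\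
  (forall k a1, k*a1 = p -> exists M, forall e, 0 < e < dl ->
     Cmod (Xm e - (- Ci * RtoC k * RtoC a1 - ck - 3 * (RtoC g - 1) * RtoC k * RtoC a1 * (RtoC k * RtoC a1 + Ci * ck) / (4 * ck) * RtoC e))%C <= M * e^2 /\
     Cmod (X0 e - (- Ci * (3 * RtoC k * RtoC a1 / 2) * RtoC e))%C <= M * e^2 /\
     Cmod (Xp e - (- Ci * RtoC k * RtoC a1 + ck + 3 * (RtoC g - 1) * RtoC k * RtoC a1 * (RtoC k * RtoC a1 - Ci * ck) / (4 * ck) * RtoC e))%C <= M * e^2).
Proof.
  destruct uu_near0 as [d3 [Hd3 Hu3]].
  set (dl := Rmin d0 d3).
  assert (Hdl0 : 0 < dl) by (apply Rmin_glb_lt; [apply d0_pos | auto]).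
  assert (Hdl : dl <= d0) by apply Rmin_l.
  assert (Hu : forall x, Rabs x < dl -> 3 < uu x).
  { intros x Hx. apply Hu3. eapply Rlt_le_trans. apply Hx. apply Rmin_r. }
  assert (HY : forall n, Cn n Y0 (-dl) dl).
  { intros n. apply Cn_sub with (-d0) d0; try lra. apply Y0_Cn. }
  assert (HB : forall n, Cn n beta (-dl) dl).
  { intros n. apply Cn_sub with (-d0) d0; try lra. apply beta_Cn. }
  assert (HR : forall n, Cn n rho (-dl) dl).
  { intros n. apply rho_Cn; auto. }
  exists dl, Xmf, X0f, Xpf. split; [auto|]. split; [|split; [|split; [|split]]].
  - split; apply smooth_of_Cn; intro n.
    + apply Cn_ext with (fun x => - (Re ck * rho x) / 2). intros; reflexivity.
      generalize (HR n) (HB n); intros H1 H2. cnt2 H1 H2.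
    + apply Cn_ext with (fun x => (- beta x - Im ck * rho x) / 2). intros; reflexivity.
      generalize (HR n) (HB n); intros H1 H2. cnt2 H1 H2.
  - split; apply smooth_of_Cn; intro n.
    + apply Cn_ext with (fun x => 0). intros; reflexivity. apply Cn_const.
    + apply Cn_ext with (fun x => - Y0 x). intros; reflexivity. apply Cn_opp. apply HY.
  - split; apply smooth_of_Cn; intro n.
    + apply Cn_ext with (fun x => Re ck * rho x / 2). intros; reflexivity.
      generalize (HR n) (HB n); intros H1 H2. cnt2 H1 H2.
    + apply Cn_ext with (fun x => (- beta x + Im ck * rho x) / 2). intros; reflexivity.
      generalize (HR n) (HB n); intros H1 H2. cnt2 H1 H2.
  - intros k a1 Hka e He X. eapply factor; eauto.
  - intros k a1 Hka.
    destruct (Xm_asym dl) with (k := k) (a1 := a1) as [M1 H1]; auto.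
    destruct (X0_asym dl) with (k := k) (a1 := a1) as [M2 H2]; auto.
    destruct (Xp_asym dl) with (k := k) (a1 := a1) as [M3 H3]; auto.
    exists (Rmax M1 (Rmax M2 M3)). intros e He.
    assert (0 <= e^2) by (apply pow_le; lra).
    assert (M1 <= Rmax M1 (Rmax M2 M3)) by apply Rmax_l.
    assert (M2 <= Rmax M1 (Rmax M2 M3)) by (eapply Rle_trans; [apply Rmax_l|apply Rmax_r]).
    assert (M3 <= Rmax M1 (Rmax M2 M3)) by (eapply Rle_trans; [apply Rmax_r|apply Rmax_r]).
    split; [|split].
    + eapply Rle_trans. apply H1; auto. apply Rmult_le_compat_r; auto.
    + eapply Rle_trans. apply H2; auto. apply Rmult_le_compat_r; auto.
    + eapply Rle_trans. apply H3; auto. apply Rmult_le_compat_r; auto.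
Qed.

End Root.

Open Scope C_scope.

Theorem proposition1 (k a1 c gamma : R) (ck : C) :
  (0 < a1)%R -> (0 < c)%R -> (1 <= gamma)%R -> k <> 0%R ->
  (c ^ 2 <> k ^ 2 * a1 ^ 2)%R ->
  ck * ck = RtoC (c ^ 2 - k ^ 2 * a1 ^ 2) ->
  exists (delta : R) (Xm X0 Xp : R -> C),
    (0 < delta)%R /\
    Csmooth_on Xm (- delta) delta /\
    Csmooth_on X0 (- delta) delta /\
    Csmooth_on Xp (- delta) delta /\
    (* for every Pr > 1/delta, the three roots (with multiplicity) of P
       are Xm (1/Pr), X0 (1/Pr), Xp (1/Pr) *)
    (forall eps : R, (0 < eps < delta)%R ->
       forall X : C,
         Pdisp k a1 c gamma (/ eps) X = (X - Xm eps) * (X - X0 eps) * (X - Xp eps)) /\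
    (* asymptotic expansions with O(1/Pr^2) remainders *)
    (exists M : R, forall eps : R, (0 < eps < delta)%R ->
       (Cmod (Xm eps - (- Ci * RtoC k * RtoC a1 - ck
              - 3 * (RtoC gamma - 1) * RtoC k * RtoC a1 * (RtoC k * RtoC a1 + Ci * ck)
                / (4 * ck) * RtoC eps)) <= M * eps ^ 2)%R /\
       (Cmod (X0 eps - (- Ci * (3 * RtoC k * RtoC a1 / 2) * RtoC eps)) <= M * eps ^ 2)%R /\
       (Cmod (Xp eps - (- Ci * RtoC k * RtoC a1 + ck
              + 3 * (RtoC gamma - 1) * RtoC k * RtoC a1 * (RtoC k * RtoC a1 - Ci * ck)
                / (4 * ck) * RtoC eps)) <= M * eps ^ 2)%R).
Proof.
  intros Ha1 Hc Hg Hk Hc2 Hck.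
  assert (Hp : (k*a1 <> 0)%R) by (apply Rmult_integral_contrapositive; split; lra).
  assert (Hkap : (c*c - (k*a1)*(k*a1) <> 0)%R).
  { intro E. apply Hc2. replace (c^2)%R with (c*c)%R by ring.
    replace (k^2*a1^2)%R with ((k*a1)*(k*a1))%R by ring. lra. }
  assert (Hck' : ck * ck = RtoC (c*c - (k*a1)*(k*a1))) by (rewrite Hck; f_equal; ring).
  destruct (main_p (k*a1) c gamma Hp Hc Hg Hkap ck Hck') as [dl [Xm [X0 [Xp [H1 [H2 [H3 [H4 [H5 H6]]]]]]]]].
  exists dl, Xm, X0, Xp. split; [auto|]. split; [auto|]. split; [auto|]. split; [auto|]. split.
  - intros eps Heps X. apply H5; auto.
  - destruct (H6 k a1 eq_refl) as [M HM]. exists M. exact HM.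
Qed.
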